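(* Let $X$ be a Tychonoff topological space which has a complete sequence $(\mathcal D_n)_{n\in\mathbb N}$ of covers such that each $\mathcal D_n$ is countable, disjoint, and consists of $F_\sigma$ subsets of $X$. Then $X$ is absolutely $F_{\sigma\delta}$, i.e. $X$ is an $F_{\sigma\delta}$ subset of $cX$ for every compactification $cX$ of $X$.
   Context: A filter on $X$ is a nonempty family of subsets of $X$ closed under supersets and finite intersections and not containing $\emptyset$. A point $x\in X$ is an accumulation point of a filter $\mathcal F$ if every neighborhood of $x$ meets every element of $\mathcal F$. A sequence $(\mathcal F_n)_{n\in\mathbb N}$ of covers of $X$ is complete if every filter on $X$ which intersects each $\mathcal F_n$ (i.e. contains some element of $\mathcal F_n$ for each $n$) has an accumulation point in $X$. A cover is disjoint if its elements are pairwise disjoint, countable if it has countably many elements, and $F_\sigma$ if its elements are $F_\sigma$ subsets of $X$. A compactification of $X$ is a compact (Hausdorff) space $cX$ together with a homeomorphic embedding of $X$ onto a dense subspace of $cX$; we identify $X$ with its image. *)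

(* Defs.v *)
From HB Require Import structures.
From mathcomp Require Import all_boot all_order all_algebra.
From mathcomp Require Import all_classical all_reals all_analysis.
From mathcomp Require Import Rstruct Rstruct_topology borel_hierarchy.
Set Implicit Arguments.
Unset Strict Implicit.
Unset Printing Implicit Defensive.
Local Open Scope classical_set_scope.
Local Open Scope ring_scope.

Definition tychonoff_space (X : topologicalType) : Prop :=
  accessible_space X /\
  forall (x : X) (B : set X), closed B -> ~ B x ->
    exists f : X -> Rdefinitions.R, continuous f /\ f x = 0%R /\ (forall y, B y -> f y = 1%R).

Definition cover_of (X : Type) (D : set (set X)) : Prop :=
  \bigcup_(A in D) A = [set: X].

Definition disjoint_family (X : Type) (D : set (set X)) : Prop :=
  trivIset D (fun A : set X => A).

Definition Fsigma_family (X : topologicalType) (D : set (set X)) : Prop :=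
  forall A, D A -> Fsigma A.

Definition complete_sequence (X : topologicalType) (D : nat -> set (set X)) : Prop :=
  (forall n, cover_of (D n)) /\
  forall F : set_system X, ProperFilter F ->
    (forall n, exists A, D n A /\ F A) -> exists x : X, cluster F x.

Definition embedding (X Y : topologicalType) (f : X -> Y) : Prop :=
  [/\ injective f, continuous f &
      forall U : set X, open U -> exists V : set Y, open V /\ f @` U = V `&` range f].

Definition compactification (X K : topologicalType) (f : X -> K) : Prop :=
  [/\ compact [set: K], hausdorff_space K, embedding f & dense (range f)].

Definition Fsigmadelta (T : topologicalType) (S : set T) : Prop :=
  exists2 G : (set T)^nat, (forall n, Fsigma (G n)) & S = \bigcap_n G n.

Definition absolutely_Fsigmadelta (X : topologicalType) : Prop :=
  forall (K : topologicalType) (f : X -> K), compactification f -> Fsigmadelta (range f).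

(* Main.v *)
Require Import Defs.
From mathcomp Require Import all_boot all_order all_algebra.
From mathcomp Require Import all_classical all_reals all_analysis.
From mathcomp Require Import borel_hierarchy.
Local Open Scope classical_set_scope.

Lemma countable_img (T U : Type) (g : T -> U) (A : set T) :
  countable A -> countable (g @` A).
Proof. by move=> cA; apply: card_le_trans (card_image_le g A) cA. Qed.

Lemma countable_surj (T : Type) (A : set T) :
  countable A -> A = set0 \/ exists g : nat -> T, A = range g.
Proof.
move=> /pfcard_geP[->|/surjfunPex[g ->]]; [by left|right].
by exists g.
Qed.

Lemma Fsigma_countable_union (T : topologicalType) (A : set (set T)) :
  countable A -> (forall B, A B -> closed B) -> Fsigma (\bigcup_(B in A) B).
Proof.
move=> /countable_surj[->|[g ->]] cl.
  exists (fun _ => set0) => [_|]; first exact: closed0.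
  by rewrite bigcup_set0 bigcup0.
exists g => [i|]; first by apply: cl; exists i.
apply/seteqP; split => [x [_ [i _ <-] gix]|x [i _ gix]]; first by exists i.
by exists (g i) => //; exists i.
Qed.

Lemma Fsigmadelta_countable (T : topologicalType) (A : set (set T)) :
  countable A -> (forall B, A B -> Fsigma B) -> Fsigmadelta (\bigcap_(B in A) B).
Proof.
move=> /countable_surj[->|[g ->]] cl.
  exists (fun _ => setT) => [_|]; first exact/closed_Fsigma/closedT.
  by rewrite bigcap_set0 bigcap_const.
exists g => [i|]; first by apply: cl; exists i.
apply/seteqP; split => [x Hx i _|x Hx _ [i _ <-]]; last exact: Hx.
by apply: Hx; exists i.
Qed.

Lemma embed_closed (X K : topologicalType) (f : X -> K) :
  embedding f -> forall P : set X, closed P ->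
  forall x, closure (f @` P) (f x) -> P x.
Proof.
case=> finj _ fo P cP x cx; apply: contrapT => nPx.
have [V [oV eV]] := fo (~` P) (closed_openC cP).
have : (f @` (~` P)) (f x) by exists x.
rewrite eV => -[Vfx _].
have [_ [[p Pp <-] Vfp]] := cx V (open_nbhs_nbhs (conj oV Vfx)).
have : (f @` (~` P)) (f p) by rewrite eV; split => //; exists p.
by case=> u nPu /finj eu; apply: nPu; rewrite eu.
Qed.

Lemma key_lemma (X K : topologicalType) (f : X -> K) (D : nat -> set (set X)) :
  complete_sequence D -> hausdorff_space K -> continuous f ->
  forall T : nat -> set X, (forall n, T n.+1 `<=` T n) ->
  (forall n, exists A, D n A /\ T n.+1 `<=` A) ->
  forall z, (forall n, closure (f @` T n) z) -> exists x, f x = z.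
Proof.
move=> [_ cD] hK fc T Tdec TA z hz.
have Tmon i j : (i <= j)%N -> T j `<=` T i.
  move=> /subnK <-; elim: (j - i)%N => [|k IH]; first by [].
  by rewrite addSn; apply: subset_trans (Tdec _) IH.
pose G := filter_from (fun i : nat * set K => open i.2 /\ i.2 z)
                      (fun i => T i.1 `&` f @^-1` i.2).
have FG : Filter G.
  apply: filter_from_filter; first by exists (0%N, setT); split => //; exact: openT.
  move=> [i V] [j W] /= [oV Vz] [oW Wz].
  exists (maxn i j, V `&` W); first by split => //; exact: openI.
  move=> w /= [Tw [Vw Ww]]; split; split => //.
    by apply: (Tmon i (maxn i j)) => //; exact: leq_maxl.
  by apply: (Tmon j (maxn i j)) => //; exact: leq_maxr.
have PG : ProperFilter G.
  apply: filter_from_proper => -[n V] /= [oV Vz].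
  have [_ [[w Tw <-] Vfw]] := hz n V (open_nbhs_nbhs (conj oV Vz)).
  by exists w.
have [n|x clx] := cD G PG.
  have [A [DA TA']] := TA n; exists A; split => //.
  exists (n.+1, setT) => /=; first by split => //; exact: openT.
  by move=> w [Tw _]; exact: TA'.
exists x; apply: hK => A B nA nB.
have [V [oV Vz] VB] : exists2 V, open_nbhs z V & V `<=` B.
  by move: nB; rewrite nbhsE.
have nx : nbhs x (f @^-1` A) := fc x A nA.
have GV : G (T 0%N `&` f @^-1` V) by exists (0%N, V).
have [w [[_ Vw] Aw]] := clx _ _ GV nx.
by exists (f w); split => //; exact: VB.
Qed.

Fixpoint pieces {X : Type} (C : nat -> set (set X)) (n : nat) : set (set X) :=
  match n with
  | 0%N => [set setT]
  | m.+1 => image2 (pieces C m) (C m) setI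
  end.

Lemma W_lemma (X K : topologicalType) (f : X -> K) (D : nat -> set (set X)) :
  complete_sequence D -> (forall n, disjoint_family (D n)) ->
  compact [set: K] -> hausdorff_space K -> continuous f ->
  forall Piece : nat -> set (set X),
  (forall n x, exists P, Piece n P /\ P x) ->
  (forall n P, Piece n.+1 P -> exists Q, Piece n Q /\ P `<=` Q) ->
  (forall n P, Piece n.+1 P -> exists A, D n A /\ P `<=` A) ->
  forall J : set K, closed J -> (forall x, ~ J (f x)) ->
  forall x, exists n P, [/\ Piece n P, P x & closure (f @` P) `&` J = set0].
Proof.
move=> cD disj cK hK fc Piece Pcov Pdec PA J cJ hJ x.
apply: contrapT => H.
have H' n P : Piece n P -> P x -> closure (f @` P) `&` J !=set0.
  move=> PnP Px; apply: contrapT => /nonemptyPn E.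
  by apply: H; exists n, P; split.
pose T n := [set w | exists P, [/\ Piece n P, P x & P w]].
have Tdec n : T n.+1 `<=` T n.
  move=> w [P [PnP Px Pw]]; have [Q [PQ sPQ]] := Pdec _ _ PnP.
  by exists Q; split => //; apply: sPQ.
have Tmon i j : (i <= j)%N -> T j `<=` T i.
  move=> /subnK <-; elim: (j - i)%N => [|k IH]; first by [].
  by rewrite addSn; apply: subset_trans (Tdec _) IH.
have TA n : exists A, D n A /\ T n.+1 `<=` A.
  have : (\bigcup_(A in D n) A) x by rewrite (cD.1 n).
  case=> A DA Ax; exists A; split => // w [P [PnP Px Pw]].
  have [A' [DA' PA']] := PA _ _ PnP.
  have -> : A = A' by apply: (disj n) => //; exists x; split => //; exact: PA'.
  exact: PA'.
pose F := filter_from [set: nat] (fun n => closure (f @` T n) `&` J).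
have FF : Filter F.
  apply: filter_from_filter; first by exists 0%N.
  move=> i j _ _; exists (maxn i j) => //.
  move=> w [cw Jw]; split; split => //.
    by apply: closureS cw; apply: image_subset; apply: Tmon; exact: leq_maxl.
  by apply: closureS cw; apply: image_subset; apply: Tmon; exact: leq_maxr.
have PF : ProperFilter F.
  apply: filter_from_proper => n _.
  have [P [PnP Px]] := Pcov n x.
  have [w [cw Jw]] := H' _ _ PnP Px.
  exists w; split => //; apply: closureS cw; apply: image_subset.
  by move=> u Pu; exists P; split.
have [z [_ clz]] := cK F PF (filterT).
have zin n : (closure (f @` T n) `&` J) z.
  have cl : closed (closure (f @` T n) `&` J) by apply: closedI => //; exact: closed_closure.
  suff : closure (closure (f @` T n) `&` J) z by rewrite -(closure_id _).1.
  move=> B nB; apply: clz nB.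
  by exists n.
have [x' fx'] := @key_lemma X K f D cD hK fc T Tdec TA z (fun n => (zin n).1).
by apply: (hJ x'); rewrite fx'; exact: (zin 0%N).2.
Qed.

Lemma pieces_props (X : topologicalType) (D : nat -> set (set X)) (C : nat -> set (set X)) :
  (forall n, countable (C n)) -> (forall n Q, C n Q -> closed Q) ->
  (forall n Q, C n Q -> exists A, D n A /\ Q `<=` A) ->
  (forall n x, exists Q, C n Q /\ Q x) ->
  [/\ forall n, countable (pieces C n),
      forall n P, pieces C n P -> closed P,
      forall n x, exists P, pieces C n P /\ P x,
      forall n P, pieces C n.+1 P -> exists Q, pieces C n Q /\ P `<=` Q &
      forall n P, pieces C n.+1 P -> exists A, D n A /\ P `<=` A].
Proof.
move=> Cc Ccl CA Ccov; split.
- elim => [|n IH] /=; first exact: countable1.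
  by rewrite image2E; apply: countable_img; apply: countableX.
- elim => [|n IH] P /=; first by move=> ->; exact: closedT.
  by move=> [Q PQ [R CR <-]]; apply: closedI; [exact: IH|exact: Ccl CR].
- move=> n x; elim: n => [|n [P [PP Px]]] /=; first by exists setT.
  have [Q [CQ Qx]] := Ccov n x.
  by exists (P `&` Q); split => //; exists P => //; exists Q.
- by move=> n P /= [Q PQ [R CR <-]]; exists Q; split => // w [].
- move=> n P /= [Q PQ [R CR <-]]; have [A [DA RA]] := CA _ _ CR.
  by exists A; split => // w [_ /RA].
Qed.

Lemma countableU2 (T : Type) (A B : set T) :
  countable A -> countable B -> countable (A `|` B).
Proof.
move=> cA cB.
have -> : A `|` B = \bigcup_(b in [set: bool]) (if b then A else B).
  apply/seteqP; split => [x [Ax|Bx]|x [[] _ ?]]; by [exists true|exists false|left|right].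
by apply: bigcup_countable => // -[].
Qed.

Theorem proposition4p5 (X : topologicalType) :
  tychonoff_space X ->
  (exists D : nat -> set (set X),
      complete_sequence D /\
      (forall n, [/\ countable (D n), disjoint_family (D n) & Fsigma_family (D n)])) ->
  absolutely_Fsigmadelta X.
Proof.
move=> _ [D [cD hD]] K f [cK hK emb _].
have [finj fc fo] := emb.
have disj n : disjoint_family (D n) by have [] := hD n.
have /choice[dec hdec] : forall nA : nat * set X, exists F : (set X)^nat,
    D nA.1 nA.2 -> (forall i, closed (F i)) /\ nA.2 = \bigcup_i F i.
  move=> [n A].
  have [_ _ fs] := hD n.
  case: (pselect (D n A)) => h; last by exists (fun _ => set0).
  by have [F cF eF] := fs A h; exists F.
pose C n := \bigcup_(A in D n) range (dec (n, A)).
have Cc n : countable (C n).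
  apply: bigcup_countable; first by have [] := hD n.
  by move=> A _; apply: countable_img; exact: countableP.
have Ccl n Q : C n Q -> closed Q.
  by move=> [A DA [i _ <-]]; exact: ((hdec (n, A) DA).1 i).
have CA n Q : C n Q -> exists A, D n A /\ Q `<=` A.
  move=> [A DA [i _ <-]]; exists A; split => // w dw.
  have eA := (hdec (n, A) DA).2; simpl in eA.
  by rewrite eA; exists i.
have Ccov n x : exists Q, C n Q /\ Q x.
  have : (\bigcup_(A in D n) A) x by rewrite (cD.1 n).
  case=> A DA Ax; have eA := (hdec (n, A) DA).2; simpl in eA.
  rewrite eA in Ax; case: Ax => i _ dx.
  by exists (dec (n, A) i); split => //; exists A => //; exists i.
have [Pc Pcl Pcov Pdec PA] := @pieces_props X D C Cc Ccl CA Ccov.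
pose H n := \bigcup_(B in [set closure (f @` P) | P in pieces C n]) B.
pose AllP := \bigcup_(n in [set: nat]) pieces C n.
pose Wf (J : set K) := \bigcup_(B in [set closure (f @` Q) | Q in
   [set Q | AllP Q /\ closure (f @` Q) `&` J = set0]]) B.
pose W' (P P' : set X) := [set z | P `&` P' = set0 ->
   Wf (closure (f @` P) `&` closure (f @` P')) z].
pose G := range H `|` \bigcup_(n in [set: nat]) image2 (pieces C n) (pieces C n) W'.
have -> : range f = \bigcap_(B in G) B.
  apply/seteqP; split.
  - move=> _ [x _ <-] B [[n _ <-]|[n _ [P PP [P' PP' <-]]]].
    + have [P [PnP Px]] := Pcov n x.
      exists (closure (f @` P)); first by exists P.
      by apply: subset_closure; exists x.
    + move=> /= disjPP'.
      have cJ : closed (closure (f @` P) `&` closure (f @` P')).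
        by apply: closedI; exact: closed_closure.
      have hJ : forall x', ~ (closure (f @` P) `&` closure (f @` P')) (f x').
        move=> x' [c1 c2].
        have Px := @embed_closed X K f emb P (Pcl _ _ PP) x' c1.
        have P'x := @embed_closed X K f emb P' (Pcl _ _ PP') x' c2.
        have : (P `&` P') x' by [].
        by rewrite disjPP'.
      have [m [Q [QQ Qx QJ]]] := @W_lemma X K f D cD disj cK hK fc (pieces C)
        Pcov Pdec PA _ cJ hJ x.
      exists (closure (f @` Q)); first by exists Q => //; split => //; exists m.
      by apply: subset_closure; exists x.
  - move=> y Hy.
    have yH n : H n y by apply: Hy; left; exists n.
    have yW n P P' : pieces C n P -> pieces C n P' -> W' P P' y.
      by move=> PP PP'; apply: Hy; right; exists n => //; exists P => //; exists P'.
    pose T n := [set w | exists P, [/\ pieces C n P, closure (f @` P) y & P w]].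
    have Tdec n : T n.+1 `<=` T n.
      move=> w [P [PP cyP Pw]]; have [Q [PQ sPQ]] := Pdec _ _ PP.
      exists Q; split => //; last exact: sPQ.
      by apply: closureS cyP; apply: image_subset.
    have TA n : exists A, D n A /\ T n.+1 `<=` A.
      case: (yH n.+1) => _ [P0 PP0 <-] cy0.
      have [A [DA P0A]] := PA _ _ PP0.
      exists A; split => // w [P [PP cyP Pw]].
      have [A' [DA' PA']] := PA _ _ PP.
      have : P `&` P0 !=set0.
        apply: contrapT => /nonemptyPn E.
        have := yW _ _ _ PP PP0 E.
        move=> [_ [Q [_ QJ] <-] cyQ].
        have : (closure (f @` Q) `&` (closure (f @` P) `&` closure (f @` P0))) y by [].
        by rewrite QJ.
      move=> [u [Pu P0u]].
      have -> : A = A' by apply: (disj n) => //; exists u; split; [exact: P0A|exact: PA'].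
      exact: PA'.
    have hz n : closure (f @` T n) y.
      case: (yH n) => _ [P PP <-] cyP.
      have sub : f @` P `<=` f @` T n by apply: image_subset => w Pw; exists P; split.
      exact: closureS sub _ cyP.
    have [x fx] := @key_lemma X K f D cD hK fc T Tdec TA y hz.
    by exists x.
apply: Fsigmadelta_countable.
- apply: countableU2; first by apply: countable_img; exact: countableP.
  apply: bigcup_countable => // n _.
  by rewrite image2E; apply: countable_img; apply: countableX.
- move=> B [[n _ <-]|[n _ [P PP [P' PP' <-]]]].
  + apply: Fsigma_countable_union; first exact: countable_img.
    by move=> _ [P _ <-]; exact: closed_closure.
  + case: (pselect (P `&` P' = set0)) => h; last first.
      have -> : W' P P' = setT by apply/seteqP; split => // z _ e; case: h.
      exact/closed_Fsigma/closedT.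
    have -> : W' P P' = Wf (closure (f @` P) `&` closure (f @` P')).
      by apply/seteqP; split => z; [move=> /(_ h)|move=> ? _].
    apply: Fsigma_countable_union; last by move=> _ [Q _ <-]; exact: closed_closure.
    apply: countable_img; apply: (@sub_countable _ _ _ AllP).
      by apply: subset_card_le => Q [].
    by apply: bigcup_countable.
Qed.
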